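(* Suppose all issues are binary and there is a single order $\mathcal O$ of the issues such that every agent's preference ranking is $\mathcal O$-legal. Then local dominance improvement dynamics converge: from any initial vote profile, every sequence of LDI steps is finite. This holds for any scheduler and for any nonnegative uncertainty parameters of the agents, which may vary between rounds.
   Context: Issues $\mathcal P=\{1,\dots,p\}$ with candidate sets $D_i$; binary means $D_i=\{0,1\}$ for all $i$. There are $n$ agents with strict rankings $\succ_j$ over $\mathcal D=\prod_iD_i$, and vote profiles $a\in\mathcal D^n$. Score tuples and outcomes: - For a score tuple $v$ (vectors $v^i\in\mathbb N^{D_i}$), the plurality outcome $f(v)$ picks on each issue the top-scoring candidate, with ties broken lexicographically. - $v+b$ adds one vote for $b^i$ on each issue $i$. - $s_{-j}(a)$ is the score tuple of $a$ without agent $j$. Uncertainty: per issue, a candidate-wise distance $\delta(s,\tilde s)=\max_c\hat\delta(s(c),\tilde s(c))$ with $\hat\delta$ monotone (e.g. $\ell_\infty$). With parameters $r_j$, $$\tilde S_{-j}(a;r_j)=\prod_i\{v^i:\delta(v^i,s^i_{-j}(a))\le r^i_j\}.$$ Local dominance: $\hat a_j$ $S$-beats $a_j$ if some $v\in S$ has $f(v+\hat a_j)\succ_j f(v+a_j)$. It $S$-dominates $a_j$ if it $S$-beats $a_j$ and $a_j$ does not $S$-beat it. An LDI step of agent $j$ on issue $i$ at $a$ (with $S=\tilde S_{-j}(a;r_j)$, $r_j$ being $j$'s current parameters) is a change to a vote that $S$-dominates $a_j$, differs from $a_j$ only on issue $i$, and is not $S$-dominated by another vote differing from $a_j$ only on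 issue $i$. Dynamics: at each round a scheduler picks an agent and an issue on which that agent has an LDI step, and the agent makes that step. $\mathcal O$-legality: for an order $\mathcal O=(o_1,\dots,o_p)$ of the issues, a ranking is $\mathcal O$-legal if, for each $i$, its relative ordering of the candidates of issue $o_i$ (holding all other issues fixed) depends only on the values of issues $o_1,\dots,o_{i-1}$, and not on the values of $o_{i+1},\dots,o_p$. *)

(* Defs.v *)
From mathcomp Require Import all_boot all_order all_algebra all_fingroup.
Set Implicit Arguments. Unset Strict Implicit. Unset Printing Implicit Defensive.
Import Order.TTheory GRing.Theory Num.Theory.
Local Open Scope ring_scope.

Section Voting.
Variables (p n : nat).

(* Binary issues: D_i = {0,1} = bool (false = 0, true = 1). *)
Definition outcome := {ffun 'I_p -> bool}.
Definition profile := 'I_n -> outcome.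
Definition scores := 'I_p -> bool -> nat.

Definition strict_ranking (pr : rel outcome) : Prop :=
  [/\ irreflexive pr, transitive pr &
      forall x y : outcome, x != y -> pr x y || pr y x].

(* Plurality outcome; on each issue the top-scoring candidate, ties broken
   lexicographically, i.e. in favour of candidate 0 = false. *)
Definition plurality (v : scores) : outcome :=
  [ffun i => (v i false < v i true)%N].

Definition add_vote (v : scores) (b : outcome) : scores :=
  fun i c => (v i c + (b i == c))%N.

Definition scores_wo (a : profile) (j : 'I_n) : scores :=
  fun i c => #|[pred k : 'I_n | (k != j) && (a k i == c)]|.

Definition dist {R : realDomainType} (dhat : nat -> nat -> R)
  (s s' : bool -> nat) : R :=
  Num.max (dhat (s false) (s' false)) (dhat (s true) (s' true)).

Definition monotone_dhat {R : realDomainType} (dhat : nat -> nat -> R) : Prop :=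
  (forall x, dhat x x = 0) /\
  (forall x y z : nat, (x <= y <= z)%N ->
     [/\ dhat x y <= dhat x z, dhat y x <= dhat z x,
         dhat z y <= dhat z x & dhat y z <= dhat x z]).

Definition unc_set {R : realDomainType} (dhat : nat -> nat -> R)
  (a : profile) (j : 'I_n) (rj : 'I_p -> R) (v : scores) : Prop :=
  forall i, dist dhat (v i) (scores_wo a j i) <= rj i.

Definition beats (pr : rel outcome) (S : scores -> Prop) (b' b : outcome) : Prop :=
  exists v, S v /\ pr (plurality (add_vote v b')) (plurality (add_vote v b)).

Definition dominates (pr : rel outcome) (S : scores -> Prop) (b' b : outcome) : Prop :=
  beats pr S b' b /\ ~ beats pr S b b'.

Definition differs_only_on (i : 'I_p) (b b' : outcome) : Prop :=
  forall i', i' != i -> b' i' = b i'.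

Definition LDI_move {R : realDomainType} (dhat : nat -> nat -> R)
  (pref : 'I_n -> rel outcome) (a : profile) (j : 'I_n) (i : 'I_p)
  (rj : 'I_p -> R) (b : outcome) : Prop :=
  let S := unc_set dhat a j rj in
  [/\ dominates (pref j) S b (a j),
      differs_only_on i (a j) b &
      forall b', differs_only_on i (a j) b' -> b' != b ->
        ~ dominates (pref j) S b' b].

Definition LDI_step {R : realDomainType} (dhat : nat -> nat -> R)
  (pref : 'I_n -> rel outcome) (a : profile) (j : 'I_n) (i : 'I_p)
  (rj : 'I_p -> R) (a' : profile) : Prop :=
  (forall k, k != j -> a' k = a k) /\ LDI_move dhat pref a j i rj (a' j).

Definition upd (d : outcome) (i : 'I_p) (c : bool) : outcome :=
  [ffun i' => if i' == i then c else d i'].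

(* O-legality, O = (o 0, ..., o (p-1)) given as a permutation of the issues:
   the relative ordering of the candidates of issue o k (other issues fixed)
   depends only on the values of issues o k', k' < k. *)
Definition O_legal (o : {perm 'I_p}) (pr : rel outcome) : Prop :=
  forall k : 'I_p, forall d d' : outcome,
    (forall k' : 'I_p, (k' < k)%N -> d (o k') = d' (o k')) ->
    forall c c' : bool,
      pr (upd d (o k) c) (upd d (o k) c') = pr (upd d' (o k) c) (upd d' (o k) c').

End Voting.

(* Main.v *)
Require Import Defs.
From mathcomp Require Import all_boot all_order all_algebra all_fingroup.
From mathcomp Require Import zify.
From Stdlib Require Import Classical.
Import Order.TTheory GRing.Theory Num.Theory.
Local Open Scope ring_scope.

Lemma pivot (x y : nat) (e : bool) : (x + (e == false) < y + (e == true))%N != (x + (~~e == false) < y + (~~e == true))%N -> (x + (e == false) < y + (e == true))%N = e.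
Proof. case: e => /=; rewrite ?addn0 ?addn1; do 2 case: ltnP => //; lia. Qed.

Lemma ldi_key (R : realDomainType) p n (dhat : nat -> nat -> R)
  (pref : 'I_n -> rel (outcome p)) (a : profile p n) (j : 'I_n) (i : 'I_p)
  (rj : 'I_p -> R) (b : outcome p) :
  strict_ranking (pref j) -> monotone_dhat dhat -> (forall i, 0 <= rj i) ->
  LDI_move dhat pref a j i rj b ->
  [/\ b i != a j i, (forall i', i' != i -> b i' = a j i') &
     pref j (upd (plurality (add_vote (scores_wo a j) (a j))) i (b i))
            (upd (plurality (add_vote (scores_wo a j) (a j))) i (~~ b i))].
Proof.
move=> [irr _ tot] [d0 _] r0 [[[v0 [Sv0 H]] nb] dif _].
have bi : b i != a j i.
  apply/negP => /eqP bi; have eb : b = a j.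
    apply/ffunP => i'; case: (eqVneq i' i) => [->//|/dif //].
  by move: H; rewrite eb irr.
have aji : a j i = ~~ b i by move: bi; case: (b i); case: (a j i).
split => //.
pose v : scores p := fun i' => if i' == i then v0 i else scores_wo a j i'.
have Sv : unc_set dhat a j rj v.
  move=> i'; rewrite /v; case: (eqVneq i' i) => [->|_]; first exact: Sv0.
  by rewrite /dist !d0 maxxx.
set D := plurality _.
have neq : plurality (add_vote v0 b) != plurality (add_vote v0 (a j)).
  by apply/negP => /eqP e; move: H; rewrite e irr.
have neqi : plurality (add_vote v0 b) i != plurality (add_vote v0 (a j)) i.
  apply/negP => /eqP e; move/negP: neq; apply; apply/eqP/ffunP => i'.
  case: (eqVneq i' i) => [->//|ne].
  by rewrite !ffunE /add_vote (dif _ ne).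
have piv : plurality (add_vote v0 b) i = b i.
  move: neqi; rewrite !ffunE /add_vote aji; exact: pivot.
have piv2 : plurality (add_vote v0 (a j)) i = ~~ b i.
  by move: neqi; rewrite piv; case: (b i); case: (plurality _ _).
have E1 : plurality (add_vote v b) = upd D i (b i).
  apply/ffunP => i'; rewrite /upd !ffunE; case: (eqVneq i' i) => [->|ne].
    by move: piv; rewrite ffunE /add_vote /v eqxx.
  by rewrite /add_vote /v (negPf ne) (dif _ ne) /D.
have E2 : plurality (add_vote v (a j)) = upd D i (~~ b i).
  apply/ffunP => i'; rewrite /upd !ffunE; case: (eqVneq i' i) => [->|ne].
    by move: piv2; rewrite ffunE /add_vote /v eqxx.
  by rewrite /add_vote /v (negPf ne) /D.
have ne2 : upd D i (b i) != upd D i (~~ b i).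
  by apply/negP => /eqP /ffunP /(_ i); rewrite !ffunE eqxx; case: (b i).
case/orP: (tot _ _ ne2) => // hh.
exfalso; apply: nb; exists v; split => //; by rewrite E1 E2.
Qed.
Lemma descent (f : nat -> nat) (P : nat -> bool) T :
  (forall t, (T <= t)%N -> (f t.+1 <= f t)%N) ->
  (forall t, (T <= t)%N -> P t -> (f t.+1 < f t)%N) ->
  exists T', forall t, (T' <= t)%N -> ~~ P t.
Proof.
move=> mon dec.
have mon2 : forall t0 d, (T <= t0)%N -> (f (t0 + d) <= f t0)%N.
  move=> t0; elim=> [|d IH] h; first by rewrite addn0.
  by rewrite addnS; apply: leq_trans (IH h); apply: mon; lia.
suff: forall m t0, (T <= t0)%N -> (f t0 <= m)%N ->
  exists T', forall t, (T' <= t)%N -> ~~ P t by move/(_ (f T) T (leqnn _) (leqnn _)).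
elim=> [|m IH] t0 h0 hf.
- exists t0 => t ht; apply/negP => Pt.
  have := dec t (leq_trans h0 ht) Pt.
  have := mon2 t0 (t - t0)%N h0; rewrite subnKC //; lia.
- case: (classic (exists t, (t0 <= t)%N /\ P t)) => [[t [ht Pt]]|nex].
  + apply: (IH t.+1); first lia.
    have := dec t (leq_trans h0 ht) Pt.
    have := mon2 t0 (t - t0)%N h0; rewrite subnKC //; lia.
  + exists t0 => t ht; apply/negP => Pt; apply: nex; by exists t.
Qed.

Theorem theorem2 (R : realDomainType) (p n : nat)
  (pref : 'I_n -> rel (outcome p)) (o : {perm 'I_p})
  (dhat : nat -> nat -> R) :
  (forall j, strict_ranking (pref j)) ->
  (forall j, O_legal o (pref j)) ->
  monotone_dhat dhat ->
  ~ exists (a : nat -> profile p n) (ag : nat -> 'I_n) (iss : nat -> 'I_p)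
           (r : nat -> 'I_n -> 'I_p -> R),
      (forall t j i, 0 <= r t j i) /\
      (forall t, LDI_step dhat pref (a t) (ag t) (iss t) (r t (ag t)) (a t.+1)).
Proof.
move=> strict leg mon [a [ag [iss [r [r0 step]]]]].
pose rank (i : 'I_p) : nat := (o^-1)%g i.
have rankK : forall k' : 'I_p, rank (o k') = k' by move=> k'; rewrite /rank permK.
have col : forall t i' j', i' != iss t -> a t.+1 j' i' = a t j' i'.
  move=> t i' j' ne; case: (step t) => oth [_ dif _].
  case: (eqVneq j' (ag t)) => [->|nj]; [exact: dif | by rewrite oth].
pose Dof (a0 : profile p n) j := plurality (add_vote (scores_wo a0 j) (a0 j)).
have Dcol : forall (a1 a2 : profile p n) j (i' : 'I_p), (forall j', a1 j' i' = a2 j' i') ->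
    Dof a1 j i' = Dof a2 j i'.
  move=> a1 a2 j i' h.
  have e : forall c, scores_wo a1 j i' c = scores_wo a2 j i' c.
    by move=> c; apply: eq_card => x; rewrite !inE h.
  by rewrite !ffunE /add_vote !e h.
have claim : forall k, exists T, forall t, (T <= t)%N -> (k <= rank (iss t))%N.
  elim=> [|k [T HT]]; first by exists 0%N.
  case: (ltnP k p) => kp; last first.
    exists T => t ht; have := HT t ht; have := ltn_ord ((o^-1)%g (iss t)).
    rewrite /rank; lia.
  pose ik : 'I_p := Ordinal kp.
  have colT : forall t (k' : 'I_p) j', (T <= t)%N -> (k' < k)%N ->
      a t j' (o k') = a T j' (o k').
    move=> t k' j' ht hk; rewrite -(subnKC ht); elim: (t - T)%N => [|d IH].
      by rewrite addn0.
    rewrite addnS col // ; apply/negP => /eqP e.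
    have := HT (T + d)%N (leq_addr _ _); rewrite -e rankK; lia.
  pose g j := pref j (upd (Dof (a T) j) (o ik) true) (upd (Dof (a T) j) (o ik) false).
  have key : forall t, (T <= t)%N -> iss t = o ik ->
      a t.+1 (ag t) (o ik) = g (ag t) /\ a t (ag t) (o ik) != g (ag t).
    move=> t ht e; case: (step t) => _ mv.
    have [bi _ pr] := @ldi_key _ _ _ _ _ _ _ _ _ _ (strict (ag t)) mon (r0 t (ag t)) mv.
    rewrite e in bi pr.
    have L := leg (ag t) ik (Dof (a t) (ag t)) (Dof (a T) (ag t))
      (fun k' hk => Dcol _ _ _ _ (fun j' => colT t k' j' ht hk))
      (a t.+1 (ag t) (o ik)) (~~ a t.+1 (ag t) (o ik)).
    rewrite /Dof in L; rewrite L in pr.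
    have [irr tr _] := strict (ag t).
    suff gb : g (ag t) = a t.+1 (ag t) (o ik).
      by rewrite gb; split => //; rewrite eq_sym.
    rewrite /g /Dof; move: pr; case: (a t.+1 (ag t) (o ik)) => // pr.
    by apply/negP => h; have := tr _ _ _ pr h; rewrite irr.
  pose f t := #|[pred j | a t j (o ik) != g j]|.
  have fstep : forall t, (T <= t)%N -> (f t.+1 + (iss t == o ik) <= f t)%N.
    move=> t ht; case: (eqVneq (iss t) (o ik)) => [e|ne].
      have [k1 k2] := key t ht e.
      rewrite addn1; apply: proper_card; apply/properP; split.
        apply/subsetP => x; rewrite !inE; case: (eqVneq x (ag t)) => [->|nx].
          by rewrite k1 eqxx.
        by case: (step t) => oth _; rewrite oth.
      by exists (ag t); rewrite !inE ?k1 ?eqxx.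
    rewrite addn0 /f; apply: eq_leq; apply: eq_card => x; rewrite !inE col //.
    by rewrite eq_sym.
  have [T' HT'] : exists T', forall t, (T' <= t)%N -> ~~ (iss t == o ik).
    apply: (@descent f _ T).
      by move=> t ht; apply: leq_trans (fstep t ht); apply: leq_addr.
    by move=> t ht h; have := fstep t ht; rewrite h addn1.
  exists (maxn T T') => t; rewrite geq_max => /andP [h1 h2].
  have := HT t h1; rewrite leq_eqVlt => /orP [/eqP e|//].
  have e' : (o^-1)%g (iss t) = ik by apply: val_inj; rewrite /= e.
  by move: (HT' t h2); rewrite -e' permKV eqxx.
have [T HT] := claim p.
have := HT T (leqnn _); have := ltn_ord ((o^-1)%g (iss T)); rewrite /rank; lia.
Qed.
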